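(* Fix $c \in \mathbb{R}$ and $p \in (0,1)$. For each $x^{\text{obs}} > c$ let $\theta(p) = \theta(p; x^{\text{obs}}, c)$ be the unique $\theta \in \mathbb{R}$ solving $F(x^{\text{obs}}; \theta, c) = p$. Then $\theta(p) \to -\infty$ as $x^{\text{obs}} \downarrow c$.
   Context: Let $\Phi$ denote the standard normal distribution function. For $c \in \mathbb{R}$, $a \ge c$ and $\theta \in \mathbb{R}$ define $$F(a;\theta,c) = \frac{\Phi(a-\theta) - \Phi(c-\theta)}{1-\Phi(c-\theta)},$$ which is the distribution function $\Pr(X \le a \mid X \ge c)$ of $X \sim N(\theta,1)$ conditional on $X \ge c$. It is known that for each fixed $x^{\text{obs}} > c$ the map $\theta \mapsto F(x^{\text{obs}};\theta,c)$ is continuous and strictly decreasing from $\mathbb{R}$ onto $(0,1)$, so $\theta(p)$ is well defined for every $p\in(0,1)$. *)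

(* Defs.v *)
From Stdlib Require Import Reals.
From Coquelicot Require Import Coquelicot.
Open Scope R_scope.

Definition phi_density (t : R) : R := / sqrt (2 * PI) * exp (- (t ^ 2) / 2).

Definition Phi (x : R) : R :=
  RInt_gen phi_density (Rbar_locally m_infty) (at_point x).

Definition F (a theta c : R) : R :=
  (Phi (a - theta) - Phi (c - theta)) / (1 - Phi (c - theta)).

(* Main.v *)
Require Import Defs.
From Stdlib Require Import Reals Lra.
From Coquelicot Require Import Coquelicot.
Open Scope R_scope.

Module MC.
From Stdlib Require Import Lra.
From HB Require Import structures.
From mathcomp Require Import all_boot all_order all_algebra.
From mathcomp Require Import all_classical all_reals all_analysis.
From mathcomp Require Import Rstruct Rstruct_topology measurable_realfun.
Import Order.TTheory GRing.Theory Num.Theory.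
Import numFieldNormedType.Exports.
Local Open Scope classical_set_scope.
Local Open Scope ring_scope.

Lemma RcosE (x : R) : Rtrigo_def.cos x = cos x.
Proof.
rewrite /Rtrigo_def.cos; case: exist_cos => y.
rewrite /cos_in /infinite_sum => cos_ub.
suff H : series (cos_coeff' x) @ \oo --> y.
  exact: (cvg_unique _ H (@cvg_cos_coeff' R x)).
apply/cvgrPdist_lt => /= e /RltP /cos_ub[N Ncos_ub].
near=> n.
have nN : (n.-1 >= N)%coq_nat.
  apply/ssrnat.leP; near: n; exists N.+1 => //= k /= Hk.
  by rewrite -ltnS prednK //; exact: leq_ltn_trans Hk.
have n0 : (0 < n)%N by near: n; exists 1%N.
move: Ncos_ub => /(_ _ nN) /[!RdistE] /RltP /=.
rewrite distrC sum_f_R0E prednK //.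
rewrite /series /=.
move=> H; congr (`| _ - _ | < e): H.
apply: eq_bigr=> k _; rewrite /cos_coeff' /cos_n RdivE RpowE INRE factE RpowE.
rewrite /Rsqr. have -> : Rmult x x = x ^+ 2 by rewrite expr2. rewrite -exprM -exprnP. have -> : (2 * k)%coq_nat = k.*2 by rewrite -[(2 * k)%coq_nat]/(2 * k)%N mul2n. rewrite RmultE mulrAC -mul2n. have -> : (-1)%coqR = -1 :> R by change (-1)%coqR with (Ropp 1); rewrite RoppE. by [].

Unshelve. all: by end_near. Qed.

Lemma R2E : IZR 2 = 2 :> R.
Proof. by rewrite -[IZR 2]/(1 + 1)%coqR. Qed.

Lemma RPIE : PI = pi.
Proof.
have h1 := PI2_1. have h2 := PI_4.
have h3 : (0 <= PI/2 /\ PI/2 <= 2)%coqR by lra.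
rewrite RdivE R2E in h3. case: h3 => h3 h4.
have c0 := cos_PI2. rewrite RcosE RdivE R2E in c0.
have e : PI / 2 = pi / 2 :> R.
  apply: cos_02_uniq => //; last by rewrite cos_pihalf.
  - apply/andP; split; exact/RleP.
  - by rewrite divr_ge0 ?pi_ge0// ltW// pihalf_lt2.
have : PI = (PI / 2) * 2 by rewrite mulrVK // ?unitfE // pnatr_eq0.
by rewrite e mulrVK ?unitfE ?pnatr_eq0.
Qed.

Lemma deriv_bridge (f : R^o -> R^o) (x l : R) :
  derivable f x 1 -> derive1 f x = l -> derivable_pt_lim f x l.
Proof.
move=> df fl.
have cv := df; rewrite /derivable -/(derive f x 1) -derive1E fl in cv.
move=> e /RltP e0.
move/cvgrPdist_lt: cv => /(_ e e0).
rewrite /prop_near1 /= => /nbhs_ballP [d /= d0 Hd].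
have d0' : (0 < d)%coqR by exact/RltP.
exists (mkposreal d d0') => h hn0 /= hd.
have : ball (0 : R^o) d h by rewrite /ball /= sub0r normrN -RabsE; exact/RltP.
move/Hd => /(_ (introN eqP hn0)) /=.
rewrite distrC -RabsE => /RltP.
have -> : h%:A = h :> R^o by rewrite -[h%:A]/(h * 1) mulr1.
rewrite -[_ *: _]/(_ * _) mulrC.
move=> H; apply: Rle_lt_trans H; apply: Req_le; f_equal; rewrite (Rplus_comm x h); reflexivity.
Qed.

Definition Gm (a x : R) : R :=
  (\int[@lebesgue_measure R]_(t in `[a, x]) gauss_fun t)%R.

Lemma gauss_int_itv (a b : R) :
  (@lebesgue_measure R).-integrable `[a, b] (EFin \o gauss_fun).
Proof.
apply: (integrableS _ _ _ (@integrableT_gauss R)) => //.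
Qed.

Lemma Gm_deriv (a x : R) : a < x -> derivable_pt_lim (Gm a) x (gauss_fun x).
Proof.
move=> ax.
have xu : x < x + 1 by rewrite ltrDl.
have [df fl] := @continuous_FTC1_closed R gauss_fun a x (x + 1) xu
  (gauss_int_itv a (x + 1)) ax (@continuous_gauss_fun R x).
exact: deriv_bridge df fl.
Qed.

Lemma Gm_bound (a x : R) : 0 <= Gm a x <= Num.sqrt pi.
Proof.
apply/andP; split.
  by apply: Rintegral_ge0 => t _; exact: gauss_fun_ge0.
have H : (\int[@lebesgue_measure R]_(t in `[a, x]) (gauss_fun t)%:E <=
          \int[@lebesgue_measure R]_(t in setT) (gauss_fun t)%:E)%E.
  apply: ge0_subset_integral => //.
  - by apply/measurable_EFinP; exact: measurable_gauss_fun.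
  - by move=> t _; rewrite lee_fin gauss_fun_ge0.
rewrite integralT_gauss in H.
rewrite /Gm /Rintegral.
have := fine_le (integrable_fin_num _ (gauss_int_itv a x)) _ H.
by apply.
Qed.

Lemma gauss_funE (x : R) : gauss_fun x = Rtrigo_def.exp (- (x ^ 2))%coqR.
Proof. by rewrite RexpE RpowE. Qed.

Lemma Gm_deriv' (a x : R) : (a < x)%coqR ->
  derivable_pt_lim (Gm a) x (Rtrigo_def.exp (- (x ^ 2))%coqR).
Proof. by move=> /RltP ax; rewrite -gauss_funE; exact: Gm_deriv. Qed.

Lemma Gm_bound' (a x : R) : (0 <= Gm a x /\ Gm a x <= sqrt PI)%coqR.
Proof.
have /andP[h1 h2] := Gm_bound a x.
by split; apply/RleP; rewrite // RsqrtE RPIE.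
Qed.
End MC.

Definition gau (t : R) : R := exp (- (t ^ 2)).

Lemma gau_RInt (a b : R) : a <= b -> RInt gau a b <= sqrt PI.
Proof.
intros hab.
assert (H : is_RInt gau a b (MC.Gm (a - 1) b - MC.Gm (a - 1) a)).
{ apply (is_RInt_derive (MC.Gm (a - 1)) gau).
  - intros x hx. apply is_derive_Reals. apply MC.Gm_deriv'.
    rewrite Rmin_left in hx by lra. lra.
  - intros x hx. apply (ex_derive_continuous (V:=R_NormedModule) gau). unfold gau. auto_derive. auto. }
rewrite (is_RInt_unique _ _ _ _ H).
destruct (MC.Gm_bound' (a - 1) b). destruct (MC.Gm_bound' (a - 1) a). lra.
Qed.


Lemma gau_cont x : continuous gau x.
Proof. apply (ex_derive_continuous (V:=R_NormedModule) gau). unfold gau. auto_derive. auto. Qed.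

Lemma phi_cont x : continuous phi_density x.
Proof. apply (ex_derive_continuous (V:=R_NormedModule) phi_density). unfold phi_density. auto_derive. auto. Qed.

Lemma phi_ex a b : ex_RInt phi_density a b.
Proof. apply (ex_RInt_continuous (V:=R_CompleteNormedModule)). intros; apply phi_cont. Qed.

Lemma sqrt2_pos : 0 < sqrt 2.
Proof. apply sqrt_lt_R0. lra. Qed.

Lemma s2PI_pos : 0 < sqrt (2 * PI).
Proof. apply sqrt_lt_R0. generalize PI_RGT_0. lra. Qed.

Lemma phi_eq t : phi_density t =
  scal (/ sqrt (2 * PI) * sqrt 2) (scal (/ sqrt 2) (gau (/ sqrt 2 * t + 0))).
Proof.
  assert (h := sqrt2_pos). assert (h2 := sqrt_sqrt 2 ltac:(lra)).
  assert (h3 := s2PI_pos).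
  assert (E : - ((/ sqrt 2 * t + 0) ^ 2) = - t ^ 2 / 2).
  { replace ((/ sqrt 2 * t + 0) ^ 2) with (t ^ 2 / (sqrt 2 * sqrt 2)) by (field; lra).
    rewrite h2. field. }
  unfold phi_density, gau. rewrite E.
  unfold scal; simpl; unfold mult; simpl.
  field. split; lra.
Qed.

Lemma phi_RInt_le1 a b : a <= b -> RInt phi_density a b <= 1.
Proof.
  intros hab.
  assert (hs := sqrt2_pos). assert (hp := s2PI_pos).
  assert (E : RInt phi_density a b =
    scal (/ sqrt (2 * PI) * sqrt 2) (RInt gau (/ sqrt 2 * a + 0) (/ sqrt 2 * b + 0))).
  { rewrite (RInt_ext _ (fun t => scal (/ sqrt (2 * PI) * sqrt 2) (scal (/ sqrt 2) (gau (/ sqrt 2 * t + 0))))).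
    2:{ intros; apply phi_eq. }
    rewrite (RInt_scal (V:=R_CompleteNormedModule)).
    2:{ apply (ex_RInt_continuous (V:=R_CompleteNormedModule)). intros z _.
      apply (ex_derive_continuous (V:=R_NormedModule) (fun t => scal (/ sqrt 2) (gau (/ sqrt 2 * t + 0)))).
      unfold scal; simpl; unfold mult; simpl. unfold gau. auto_derive. auto. }
    rewrite (RInt_comp_lin (V:=R_CompleteNormedModule)). reflexivity.
    apply (ex_RInt_continuous (V:=R_CompleteNormedModule)). intros; apply gau_cont. }
  rewrite E. unfold scal; simpl; unfold mult; simpl.
  assert (hb := gau_RInt (/ sqrt 2 * a + 0) (/ sqrt 2 * b + 0)
                  ltac:(apply Rplus_le_compat_r; apply Rmult_le_compat_l; [left; apply Rinv_0_lt_compat; lra | lra])).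
  assert (Q : / sqrt (2 * PI) * sqrt 2 * sqrt PI = 1).
  { rewrite sqrt_mult by (generalize PI_RGT_0; lra). field.
    split; [|lra]. apply Rgt_not_eq, sqrt_lt_R0, PI_RGT_0. }
  rewrite <- Q. apply Rmult_le_compat_l; [|exact hb].
  apply Rmult_le_pos; [left; apply Rinv_0_lt_compat|]; lra.
Qed.

Lemma phi_pos t : 0 < phi_density t.
Proof.
  unfold phi_density. apply Rmult_lt_0_compat.
  - apply Rinv_0_lt_compat, s2PI_pos.
  - apply exp_pos.
Qed.

Lemma RInt_phi_ge0 a b : a <= b -> 0 <= RInt phi_density a b.
Proof.
  intros h. apply RInt_ge_0; auto. apply phi_ex. intros; left; apply phi_pos.
Qed.

Lemma RInt_phi_Chasles a b c :
  RInt phi_density a b + RInt phi_density b c = RInt phi_density a c.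
Proof.
  apply (RInt_Chasles (V:=R_CompleteNormedModule)); apply phi_ex.
Qed.

Lemma RInt_phi_le1' a y : RInt phi_density a y <= 1.
Proof.
  destruct (Rle_or_lt a y) as [h|h].
  - apply phi_RInt_le1; auto.
  - rewrite <- (opp_RInt_swap (V:=R_CompleteNormedModule)) by apply phi_ex.
    assert (H := RInt_phi_ge0 y a ltac:(lra)).
    change (opp (RInt phi_density y a)) with (- RInt phi_density y a). lra.
Qed.

Lemma Phi_is (y : R) : exists L, L <= 1 /\
  is_RInt_gen phi_density (Rbar_locally m_infty) (at_point y) L.
Proof.
  set (E := fun z => exists a, z = RInt phi_density a y).
  assert (hb : bound E).
  { exists 1. intros z [a ->]. apply RInt_phi_le1'. }
  assert (hn : exists z, E z) by (exists (RInt phi_density y y); exists y; auto).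
  destruct (completeness E hb hn) as [L [HL1 HL2]].
  exists L. split.
  { apply HL2. intros z [a ->]. apply RInt_phi_le1'. }
  intros P [eps HP].
  assert (ex : exists a0, L - eps < RInt phi_density a0 y).
  { apply Classical_Prop.NNPP. intros hne.
    assert (L <= L - eps).
    { apply HL2. intros z [a ->].
      apply Rnot_lt_le. intros hlt. apply hne. exists a. exact hlt. }
    destruct eps as [e he]; simpl in *. lra. }
  destruct ex as [a0 Ha0].
  apply (Filter_prod _ _ _ (fun a => a < a0) (fun b => b = y)).
  - exists a0. intros x hx. exact hx.
  - reflexivity.
  - intros x b hx hb'. subst b. simpl.
    exists (RInt phi_density x y). split.
    + apply (RInt_correct (V:=R_CompleteNormedModule)). apply phi_ex.
    + apply HP.
      assert (h1 : RInt phi_density x y <= L) by (apply HL1; exists x; auto).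
      assert (h2 : RInt phi_density a0 y <= RInt phi_density x y).
      { rewrite <- (RInt_phi_Chasles x a0 y).
        assert (h := RInt_phi_ge0 x a0 ltac:(lra)). lra. }
      change (Rabs (RInt phi_density x y - L) < eps).
      apply Rabs_def1; lra.
Qed.

Lemma Phi_prop y : Phi y <= 1 /\
  is_RInt_gen phi_density (Rbar_locally m_infty) (at_point y) (Phi y).
Proof.
  destruct (Phi_is y) as [L [h1 h2]].
  assert (e : Phi y = L).
  { unfold Phi. apply (is_RInt_gen_unique (V:=R_CompleteNormedModule)); auto. }
  rewrite e. auto.
Qed.

Lemma Phi_diff a b : Phi b = Phi a + RInt phi_density a b.
Proof.
  assert (H := is_RInt_gen_Chasles (V:=R_NormedModule) (Fa:=Rbar_locally m_infty) (Fc:=at_point b)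
    phi_density a _ _ (proj2 (Phi_prop a))
    (proj2 (is_RInt_gen_at_point _ _ _ _) (RInt_correct (V:=R_CompleteNormedModule) _ _ _ (phi_ex a b)))).
  destruct (Phi_prop b) as [_ Hb].
  apply (is_RInt_gen_unique (V:=R_CompleteNormedModule)) in H.
  apply (is_RInt_gen_unique (V:=R_CompleteNormedModule)) in Hb.
  rewrite <- Hb, H. reflexivity.
Qed.

Lemma Phi_mono a b : a <= b -> Phi a <= Phi b.
Proof. intros h. rewrite (Phi_diff a b). assert (H := RInt_phi_ge0 a b h). lra. Qed.

Lemma Phi_lt1 y : Phi y < 1.
Proof.
  destruct (Phi_prop (y + 1)) as [h _]. rewrite (Phi_diff y (y + 1)) in h.
  assert (H : RInt (fun _ => 0) y (y + 1) < RInt phi_density y (y + 1)).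
  { apply RInt_lt; [lra| intros; apply phi_cont | intros; apply continuous_const
                   | intros; apply phi_pos]. }
  rewrite (RInt_const (V:=R_CompleteNormedModule)) in H.
  change (scal (y + 1 - y) 0) with ((y + 1 - y) * 0) in H.
  rewrite Rmult_0_r in H. lra.
Qed.

Lemma phi_le1 t : phi_density t <= 1.
Proof.
  unfold phi_density.
  assert (h1 : 1 <= sqrt (2 * PI)).
  { rewrite <- sqrt_1. apply sqrt_le_1_alt. generalize PI_RGT_0; generalize PI2_1; lra. }
  assert (h2 : exp (- t ^ 2 / 2) <= 1).
  { assert (h3 : - t ^ 2 / 2 <= 0) by (generalize (pow2_ge_0 t); lra).
    rewrite <- exp_0. destruct h3 as [h3|h3].
    - left; apply exp_increasing; exact h3.
    - rewrite h3; lra. }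
  assert (h4 : 0 < / sqrt (2 * PI) <= 1).
  { split. apply Rinv_0_lt_compat; lra.
    rewrite <- Rinv_1. apply Rinv_le_contravar; lra. }
  assert (h5 : 0 < exp (- t ^ 2 / 2)) by apply exp_pos.
  nra.
Qed.

Lemma RInt_phi_le a b : a <= b -> RInt phi_density a b <= b - a.
Proof.
  intros h.
  assert (H := abs_RInt_le_const phi_density a b 1 h (phi_ex a b)).
  assert (H' : Rabs (RInt phi_density a b) <= (b - a) * 1).
  { apply H. intros t _. rewrite Rabs_pos_eq. apply phi_le1. left; apply phi_pos. }
  generalize (Rle_abs (RInt phi_density a b)). lra.
Qed.

Theorem theorem1 (c p : R) (hp0 : 0 < p) (hp1 : p < 1) (theta : R -> R)
  (htheta : forall x : R, c < x -> F x (theta x) c = p) :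
  filterlim theta (at_right c) (Rbar_locally m_infty).
Proof.
  intros P [M HM].
  set (q := 1 - Phi (c - M)).
  assert (hq : 0 < q) by (unfold q; generalize (Phi_lt1 (c - M)); lra).
  assert (hpq : 0 < p * q) by (apply Rmult_lt_0_compat; lra).
  exists (mkposreal _ hpq). intros y hy hcy. apply HM.
  simpl in hy. change (Rabs (y - c) < p * q) in hy.
  apply Rnot_le_lt. intros hM.
  assert (E := htheta y hcy). unfold F in E.
  set (th := theta y) in *.
  assert (h1 : Phi (c - th) <= Phi (c - M)) by (apply Phi_mono; lra).
  assert (hden : q <= 1 - Phi (c - th)) by (unfold q; lra).
  assert (hnum : Phi (y - th) - Phi (c - th) <= y - c).
  { rewrite (Phi_diff (c - th) (y - th)).
    assert (H := RInt_phi_le (c - th) (y - th) ltac:(lra)). lra. }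
  assert (hd : y - c < p * q) by (generalize (Rle_abs (y - c)); lra).
  assert (hden0 : 0 < 1 - Phi (c - th)) by lra.
  assert (E' : Phi (y - th) - Phi (c - th) = p * (1 - Phi (c - th))).
  { rewrite <- E. field. lra. }
  nra.
Qed.
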